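(* For every 1-2-metric and every $\alpha>0$, the greedy-routing network creation game on it with edge price $\alpha$ admits no best response cycle.
   Context: A 1-2-metric is a finite metric space $(\mathcal{P},d)$ with $d(u,v)\in\{1,2\}$ for all distinct $u,v$. Game: agents are the points of $\mathcal{P}$; agent $u$'s strategy is $S_u\subseteq\mathcal{P}\setminus\{u\}$; a profile $\mathbf{s}$ defines the directed network with arcs $(u,v)$, $v\in S_u$, of length $d(u,v)$. A greedy path from $u$ to $v$ is a directed path $u=x_1,\dots,x_j=v$ of arcs with $d(x_i,v)>d(x_{i+1},v)$ for all $i$. $\mathrm{stretch}(u,v)$ is the minimum length of a greedy path from $u$ to $v$ divided by $d(u,v)$, or a fixed sufficiently large penalty constant $Z$ if none exists. Cost: $c_u(\mathbf{s})=\sum_{v\ne u}\mathrm{stretch}(u,v)+\alpha|S_u|$. A best response of $u$ to $\mathbf{s}$ is a strategy minimizing $c_u(\cdot,\mathbf{s}_{-u})$. A best response cycle is a sequence of profiles $\mathbf{s}_0,\dots,\mathbf{s}_k=\mathbf{s}_0$ ($k\ge1$) where each $\mathbf{s}_i$ arises from $\mathbf{s}_{i-1}$ by a single agent switching to a best response that strictly decreases its cost. *)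

(* Defs.v *)
From HB Require Import structures.
From mathcomp Require Import all_boot all_order all_algebra.
From Stdlib Require Import ClassicalEpsilon.
Set Implicit Arguments. Unset Strict Implicit. Unset Printing Implicit Defensive.
Import Order.TTheory GRing.Theory Num.Theory.

Definition decP (P : Prop) : bool :=
  if excluded_middle_informative P then true else false.

Lemma decPP (P : Prop) : P -> decP P.
Proof. by rewrite /decP; case: excluded_middle_informative. Qed.

Section Game.
Variable T : finType.
Variable d : T -> T -> nat.

Definition is_12metric : Prop :=
  [/\ forall u, d u u = 0%N,
      forall u v, d u v = d v u,
      forall u v w, (d u w <= d u v + d v w)%N &
      forall u v, u != v -> d u v = 1%N \/ d u v = 2%N].

Definition profile := {ffun T -> {set T}}.

Definition valid_strategy (u : T) (S : {set T}) : bool := u \notin S.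
Definition valid_profile (s : profile) : Prop := forall u, valid_strategy u (s u).

(* Greedy path towards target v: the seq p lists x_2,...,x_j after the start
   x_1 = u; consecutive vertices are joined by an arc (y \in S_x) and
   d(x_i,v) > d(x_{i+1},v). *)
Definition greedy_step (s : profile) (v : T) : rel T :=
  fun x y => (y \in s x) && (d y v < d x v)%N.

Definition greedy_path (s : profile) (u v : T) (p : seq T) : bool :=
  path (greedy_step s v) u p && (last u p == v).

Definition path_len (u : T) (p : seq T) : nat :=
  sumn (pairmap d u p).

Definition greedy_len (s : profile) (u v : T) (n : nat) : Prop :=
  exists p, greedy_path s u v p /\ path_len u p = n.

Lemma greedy_len_ex (s : profile) (u v : T) :
  (exists n, greedy_len s u v n) -> exists n, decP (greedy_len s u v n).
Proof. by case=> n Hn; exists n; apply: decPP. Qed.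

Definition greedy_dist (s : profile) (u v : T) : option nat :=
  match excluded_middle_informative (exists n, greedy_len s u v n) with
  | left H => Some (ex_minn (greedy_len_ex H))
  | right _ => None
  end.

Variable R : realFieldType.
Variables (alpha Z : R).

Local Open Scope ring_scope.

Definition stretch (s : profile) (u v : T) : R :=
  match greedy_dist s u v with
  | Some n => n%:R / (d u v)%:R
  | None => Z
  end.

Definition cost (s : profile) (u : T) : R :=
  \sum_(v | v != u) stretch s u v + alpha * #|s u|%:R.

Definition update (s : profile) (u : T) (S : {set T}) : profile :=
  [ffun w => if w == u then S else s w].

Definition best_response (s : profile) (u : T) (S : {set T}) : Prop :=
  valid_strategy u S /\
  forall S', valid_strategy u S' -> cost (update s u S) u <= cost (update s u S') u.

Definition br_move (s s' : profile) : Prop :=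
  exists u S, best_response s u S /\ s' = update s u S /\ cost s' u < cost s u.

Definition br_cycle : Prop :=
  exists (k : nat) (ss : nat -> profile),
    (1 <= k)%N /\ valid_profile (ss 0%N) /\ ss k = ss 0%N /\
    forall i, (i < k)%N -> br_move (ss i) (ss i.+1).

End Game.

(* Main.v *)
Require Import Defs.
From mathcomp Require Import all_boot all_order all_algebra.
From mathcomp Require Import zify ring lra.
From Stdlib Require Import ClassicalEpsilon.
Import Order.TTheory GRing.Theory Num.Theory.
Local Open Scope ring_scope.

Section Paths.
Set Implicit Arguments.
Variable T : finType.
Variable d : T -> T -> nat.
Hypothesis Hm : is_12metric d.

Lemma d0 {x y} : d x y = 0%N -> x = y.
Proof.
case: Hm => _ _ _ H Hxy; apply/eqP; apply/negPn/negP => /H; rewrite Hxy; by case.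
Qed.

Lemma dle2 x y : (d x y <= 2)%N.
Proof.
case: Hm => Hxx _ _ H; case: (eqVneq x y) => [->|/H]; first by rewrite Hxx.
by case=> ->.
Qed.

Lemma path_transfer (s s' : profile T) u v :
  s u = s' u ->
  (forall w y, w != u -> d w y = 1%N -> (y \in s w) = (y \in s' w)) ->
  forall p, greedy_path d s u v p -> greedy_path d s' u v p.
Proof.
move=> Hsu H; rewrite /greedy_path.
have aux : forall q x, (d x v < d u v)%N ->
    path (greedy_step d s v) x q -> path (greedy_step d s' v) x q.
  elim => [|y q IH] x Hx //=.
  move/andP => [/andP[Hy Hyv] Hq]; apply/andP; split; last first.
    exact: IH (ltn_trans Hyv Hx) Hq.
  have Hu2 := dle2 u v.
  have Hyv0 : d y v = 0%N by lia.
  have Hxv1 : d x v = 1%N by lia.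
  have Eyv := d0 Hyv0; subst y.
  have Hxu : x != u by apply/eqP => E; subst x; rewrite ltnn in Hx.
  by rewrite /greedy_step -(H x v Hxu Hxv1) Hy Hyv.
case=> [|x q] //= /andP[/andP[/andP[Hx Hxv] Hq] Hl].
by rewrite /greedy_step -Hsu Hx Hxv Hl /= andbT (aux q x Hxv Hq).
Qed.

Lemma path_len_bound (s : profile T) v :
  forall q x, path (greedy_step d s v) x q -> last x q = v ->
    (path_len d x q <= 2 * d x v)%N.
Proof.
elim => [|y q IH] x /=; first by move=> _ _; rewrite /path_len.
move=> /andP[/andP[_ Hyv] Hq] Hl.
rewrite /path_len /= -/(path_len d y q).
have := IH y Hq Hl; have := dle2 x y; lia.
Qed.

Lemma gl_le {s : profile T} {u v n} : greedy_len d s u v n -> (n <= 2 * d u v)%N.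
Proof.
case=> p [/andP[Hp /eqP Hl] <-]; exact: path_len_bound Hp Hl.
Qed.

Lemma decP_true (P : Prop) : Defs.decP P -> P.
Proof. by rewrite /Defs.decP; case: (excluded_middle_informative P). Qed.

Lemma gdP (s : profile T) u v :
  match greedy_dist d s u v with
  | Some n => greedy_len d s u v n /\ forall m, greedy_len d s u v m -> (n <= m)%N
  | None => forall n, ~ greedy_len d s u v n
  end.
Proof.
rewrite /greedy_dist; case: excluded_middle_informative => [H|H].
  case: ex_minnP => m /decP_true Hmm Hmin; split => // k Hk.
  by apply: Hmin; apply: decPP.
by move=> n Hn; apply: H; exists n.
Qed.

Lemma gd_mono {s s' : profile T} {u v} :
  (forall n, greedy_len d s u v n -> greedy_len d s' u v n) ->
  forall n, greedy_dist d s u v = Some n ->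
  exists2 m, greedy_dist d s' u v = Some m & (m <= n)%N.
Proof.
move=> H n E; have := gdP s u v; rewrite E => -[Hn _].
have := gdP s' u v; case: (greedy_dist d s' u v) => [m [_ Hmin]|Hno].
  by exists m => //; apply: Hmin; apply: H.
by exfalso; exact: Hno n (H _ Hn).
Qed.

Lemma gd_eq (s s' : profile T) u v :
  (forall n, greedy_len d s u v n -> greedy_len d s' u v n) ->
  (forall n, greedy_len d s' u v n -> greedy_len d s u v n) ->
  greedy_dist d s u v = greedy_dist d s' u v.
Proof.
move=> H1 H2; case E: (greedy_dist d s u v) => [n|].
  have [m Em Hmn] := gd_mono H1 E.
  have [n' En' Hnm] := gd_mono H2 Em.
  rewrite E in En'; case: En' => En'; subst n'.
  by rewrite Em; congr Some; apply/eqP; rewrite eqn_leq Hmn Hnm.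
case E': (greedy_dist d s' u v) => [m|] //.
have [n' En' _] := gd_mono H2 E'; by rewrite E in En'.
Qed.

Definition Full (s : profile T) w := forall y, d w y = 1%N -> y \in s w.

Variable R : realFieldType.
Variables alpha Z : R.
Hypothesis Halpha : 0 < alpha.
Hypothesis HZ : alpha + 3 <= Z.

Lemma stretch_mono (s s' : profile T) u v : v != u ->
  (forall n, greedy_len d s u v n -> greedy_len d s' u v n) ->
  stretch d Z s' u v <= stretch d Z s u v.
Proof.
move=> Hvu H; rewrite /stretch.
have Hd : (0 < d u v)%N.
  case: Hm => _ _ _ Hm4; rewrite eq_sym in Hvu; case: (Hm4 _ _ Hvu) => ->//.
have Hd' : 0 < (d u v)%:R :> R by rewrite ltr0n.
case E: (greedy_dist d s u v) => [n|].
  have [m -> Hmn] := gd_mono H E.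
  by rewrite ler_wpM2r // ?invr_ge0 ?ler0n // ler_nat.
case E': (greedy_dist d s' u v) => [m|]; last by [].
have := gdP s' u v; rewrite E' => -[Hl _].
have Hb := gl_le Hl.
rewrite ler_pdivrMr //.
have : m%:R <= 2 * (d u v)%:R :> R.
  by rewrite -[2]/(2%:R) -natrM ler_nat.
have : 1 <= (d u v)%:R :> R by rewrite ler1n.
move=> H1 H2.
have Z2 : 2 <= Z by move: Halpha HZ => ha hz; lra.
apply: (le_trans H2); rewrite ler_pM2r //.
Qed.

Lemma gl_transfer (s s' : profile T) u v :
  s u = s' u ->
  (forall w y, w != u -> d w y = 1%N -> (y \in s w) = (y \in s' w)) ->
  forall n, greedy_len d s u v n -> greedy_len d s' u v n.
Proof.
move=> Hsu H n [p [Hp Hl]]; exists p; split => //; exact: path_transfer Hp.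
Qed.

Lemma cost_eq (s s' : profile T) u :
  s u = s' u ->
  (forall w y, w != u -> d w y = 1%N -> (y \in s w) = (y \in s' w)) ->
  cost d alpha Z s u = cost d alpha Z s' u.
Proof.
move=> Hsu H; rewrite /cost Hsu; congr (_ + _); apply: eq_bigr => v _.
rewrite /stretch (@gd_eq s s' u v) //.
  exact: gl_transfer.
apply: gl_transfer => // w y Hw Hy; by rewrite H.
Qed.

Lemma full_br (s : profile T) u S :
  best_response d alpha Z s u S -> Full (update s u S) u.
Proof.
move=> [HS Hbr] y Hy; rewrite ffunE eqxx; apply/negPn/negP => HyS.
have Huy : u != y.
  apply/eqP => E; subst y; case: Hm => Hxx _ _ _; by rewrite Hxx in Hy.
set S' := y |: S.
have HS' : valid_strategy u S'.
  by move: HS; rewrite /valid_strategy in_setU1 negb_or Huy.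
have := Hbr S' HS'; apply/negP; rewrite -ltNge.
set s1 := update s u S; set s2 := update s u S'.
have Hs1 : s1 u = S by rewrite /s1 ffunE eqxx.
have Hs2 : s2 u = S' by rewrite /s2 ffunE eqxx.
have Hsub : forall v n, greedy_len d s1 u v n -> greedy_len d s2 u v n.
  move=> v n [p [/andP[Hp Hl] Hlen]]; exists p; split => //.
  rewrite /greedy_path Hl andbT; move: Hp; apply: sub_path => a b.
  rewrite /greedy_step /s1 /s2 !ffunE; case: eqP => // _.
  by rewrite /S' in_setU1 => /andP[-> ->]; rewrite orbT.
rewrite /cost Hs1 Hs2 /S' cardsU1 HyS.
have Hyu : y != u by rewrite eq_sym.
have E1 : \sum_(v | v != u) stretch d Z s1 u v = stretch d Z s1 u y +
    \sum_(v | (v != u) && (v != y)) stretch d Z s1 u v by rewrite (bigD1 y).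
have E2 : \sum_(v | v != u) stretch d Z s2 u v = stretch d Z s2 u y +
    \sum_(v | (v != u) && (v != y)) stretch d Z s2 u v by rewrite (bigD1 y).
rewrite E1 E2.
have Hrest : \sum_(v | (v != u) && (v != y)) stretch d Z s2 u v <=
             \sum_(v | (v != u) && (v != y)) stretch d Z s1 u v.
  apply: ler_sum => v /andP[Hv _]; apply: stretch_mono => //; exact: Hsub.
have Hst1 : stretch d Z s1 u y = Z.
  rewrite /stretch; have := gdP s1 u y.
  case: (greedy_dist d s1 u y) => [n [[p [Hp _]] _]|//].
  exfalso; move: Hp; rewrite /greedy_path.
  case: p => [|x q] /=; first by rewrite (negbTE Huy) ?andbF.
  rewrite /greedy_step Hs1 Hy => /andP[/andP[/andP[Hx Hxy] _] _].
  have Hxy0 : d x y = 0%N by lia.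
  by rewrite (d0 Hxy0) (negbTE HyS) in Hx.
have Hst2 : stretch d Z s2 u y <= 1.
  have Hg : greedy_len d s2 u y 1.
    exists [:: y]; split; last by rewrite /path_len /= Hy.
    rewrite /greedy_path /= /greedy_step Hs2 /S' in_setU1 eqxx /= Hy.
    by case: Hm => -> _ _ _.
  rewrite /stretch; have := gdP s2 u y.
  case: (greedy_dist d s2 u y) => [m [_ Hmin]|Hno]; last by exfalso; exact: Hno _ Hg.
  rewrite Hy divr1 -[1]/(1%:R) ler_nat; exact: Hmin.
rewrite Hst1; rewrite natrD mulrDr mulr1.
move: Halpha HZ => ha hz; lra.
Qed.

End Paths.

Theorem theorem2p10 (T : finType) (d : T -> T -> nat) (R : realFieldType) (alpha : R) :
  is_12metric d -> 0 < alpha ->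
  exists Z0 : R, forall Z : R, Z0 <= Z -> ~ br_cycle d alpha Z.
Proof.
move=> Hm Ha; exists (alpha + 3) => Z HZ [k [ss [Hk [Hv0 [Hkk Hmv]]]]].
have Hstep : forall i w, (i < k)%N -> ss i.+1 w = ss i w \/ Full d (ss i.+1) w.
  move=> i w Hi; have [u [S [HB [E _]]]] := Hmv i Hi.
  case: (eqVneq w u) => [->|Hwu].
    by right; rewrite E; exact: (full_br Hm Ha HZ HB).
  by left; rewrite E ffunE (negbTE Hwu).
have HN1 : forall w i, (i <= k)%N -> forall y, d w y = 1%N ->
    (y \in ss i w) = (y \in ss 0%N w).
  move=> w.
  have P : forall i, (i <= k)%N ->
      (forall j, (j <= i)%N -> ss j w = ss 0%N w) \/ Full d (ss i) w.
    elim => [|i IH] Hi.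
      by left => j; rewrite leqn0 => /eqP ->.
    case: (Hstep i w Hi) => [E|F]; last by right.
    case: (IH (ltnW Hi)) => [Hc|Fi].
      left => j; rewrite leq_eqVlt ltnS => /orP[/eqP->|Hj].
        by rewrite E; apply: Hc.
      exact: Hc.
    by right => y Hy; rewrite E; apply: Fi.
  case: (P k (leqnn k)) => [Hc|Fk].
    by move=> i Hi y Hy; rewrite Hc.
  have Fall : forall i, (i <= k)%N -> Full d (ss i) w.
    elim => [|i IH] Hi; first by rewrite -Hkk.
    case: (Hstep i w Hi) => [E|F] //.
    by move=> y Hy; rewrite E; apply: (IH (ltnW Hi)).
  move=> i Hi y Hy.
  by rewrite (Fall i Hi y Hy) (Fall 0%N (leq0n _) y Hy).
pose f u S := cost d alpha Z (update (ss 0%N) u S) u.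
have Hcost : forall i u, (i <= k)%N -> cost d alpha Z (ss i) u = f u (ss i u).
  move=> i u Hi; apply: (cost_eq Hm).
    by rewrite ffunE eqxx.
  by move=> w y Hw Hy; rewrite ffunE (negbTE Hw); apply: HN1.
pose Phi i := \sum_w f w (ss i w).
have Hdec : forall i, (i < k)%N -> Phi i.+1 < Phi i.
  move=> i Hi; have [u [S [_ [E Hlt]]]] := Hmv i Hi.
  rewrite /Phi (bigD1 u) //= [X in _ < X](bigD1 u) //=.
  have -> : \sum_(w | w != u) f w (ss i.+1 w) = \sum_(w | w != u) f w (ss i w).
    by apply: eq_bigr => w Hw; rewrite E ffunE (negbTE Hw).
  rewrite ltrD2r -!Hcost //; exact: ltnW.
have Hall : forall i, (i < k)%N -> Phi i.+1 < Phi 0%N.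
  elim => [|i IH] Hi; first exact: Hdec.
  exact: lt_trans (Hdec _ Hi) (IH (ltnW Hi)).
have := Hall k.-1; rewrite prednK // => /(_ (leqnn _)).
by rewrite /Phi Hkk ltxx.
Qed.
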